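(* Let $\Gamma$ be a finitely generated torsion-free nilpotent group whose center $Z(\Gamma)$ is isomorphic to $\mathbb{Z}$. If $\Gamma$ is self-similar, then $\Gamma$ is transitive self-similar.
   Context: For a finite alphabet $A$, an action of $\Gamma$ on the space $A^\omega$ of infinite words is self-similar if for all $\gamma\in\Gamma$, $a\in A$ there are $\gamma_a\in\Gamma$, $b\in A$ with $\gamma(aw)=b\gamma_a(w)$ for all $w\in A^\omega$; it is transitive if the induced action on $A$ is transitive. $\Gamma$ is self-similar (resp. transitive self-similar) if it admits a faithful self-similar action (resp. a faithful transitive self-similar action) on $A^\omega$ for some finite $A$. *)

(* Defs.v *)
From Stdlib Require Import ZArith.
From mathcomp Require Import all_boot.

Set Implicit Arguments.
Unset Strict Implicit.
Unset Printing Implicit Defensive.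

Record group := Group {
  gcar :> Type;
  gmul : gcar -> gcar -> gcar;
  gone : gcar;
  ginv : gcar -> gcar;
  gmulA : forall x y z, gmul x (gmul y z) = gmul (gmul x y) z;
  gmul1g : forall x, gmul gone x = x;
  gmulVg : forall x, gmul (ginv x) x = gone
}.

Section GroupDefs.
Variable G : group.

Fixpoint gpow (g : G) (n : nat) : G :=
  match n with O => gone G | S k => gmul g (gpow g k) end.

Definition gzpow (g : G) (z : Z) : G :=
  match z with
  | Z0 => gone G
  | Zpos p => gpow g (Pos.to_nat p)
  | Zneg p => ginv (gpow g (Pos.to_nat p))
  end.

Inductive gen (S : G -> Prop) : G -> Prop :=
  | gen_base x : S x -> gen S x
  | gen_one : gen S (gone G)
  | gen_mul x y : gen S x -> gen S y -> gen S (gmul x y)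
  | gen_inv x : gen S x -> gen S (ginv x).

Definition finitely_generated : Prop :=
  exists l : list G, forall g, gen (fun x => List.In x l) g.

Definition torsion_free : Prop :=
  forall (g : G) (n : nat), gpow g n.+1 = gone G -> g = gone G.

Definition commutator (x y : G) : G :=
  gmul (gmul (ginv x) (ginv y)) (gmul x y).

Fixpoint lcs (i : nat) : G -> Prop :=
  match i with
  | O => fun _ => True
  | S k => gen (fun c => exists x y, lcs k x /\ c = commutator x y)
  end.

Definition nilpotent : Prop :=
  exists c : nat, forall g, lcs c g -> g = gone G.

Definition center (z : G) : Prop := forall g : G, gmul z g = gmul g z.

(** Z(G) is isomorphic to Z: some central z0 such that n |-> z0^n is an
    injective homomorphism Z -> Z(G) whose image is all of Z(G). *)
Definition center_iso_Z : Prop :=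
  exists z0 : G, center z0 /\
    (forall m n : Z, gzpow z0 m = gzpow z0 n -> m = n) /\
    (forall z : G, center z -> exists n : Z, z = gzpow z0 n).

End GroupDefs.

Definition scons (A : Type) (a : A) (w : nat -> A) : nat -> A :=
  fun n => match n with O => a | S k => w k end.

Section Actions.
Variables (G : group) (A : finType).

Definition is_action (act : G -> (nat -> A) -> (nat -> A)) : Prop :=
  (forall w, act (gone G) w = w) /\
  (forall g h w, act (gmul g h) w = act g (act h w)).

Definition faithful_action (act : G -> (nat -> A) -> (nat -> A)) : Prop :=
  forall g, (forall w, act g w = w) -> g = gone G.

Definition self_similar_action (act : G -> (nat -> A) -> (nat -> A)) : Prop :=
  forall (g : G) (a : A), exists (ga : G) (b : A),
    forall w, act g (scons a w) = scons b (act ga w).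

(** the induced action on A (first letters) is transitive *)
Definition transitive_action (act : G -> (nat -> A) -> (nat -> A)) : Prop :=
  forall a b : A, exists g : G, forall w, act g (scons a w) 0 = b.

End Actions.

Definition self_similar (G : group) : Prop :=
  exists (A : finType) (act : G -> (nat -> A) -> (nat -> A)),
    is_action act /\ faithful_action act /\ self_similar_action act.

Definition transitive_self_similar (G : group) : Prop :=
  exists (A : finType) (act : G -> (nat -> A) -> (nat -> A)),
    is_action act /\ faithful_action act /\ self_similar_action act /\
    transitive_action act.

(* Main.v *)
Require Import Defs.
From Stdlib Require Import ZArith Lia Classical ClassicalEpsilon FunctionalExtensionality.
From mathcomp Require Import all_boot.

Set Implicit Arguments.
Unset Strict Implicit.
Unset Printing Implicit Defensive.

Section GroupBasics.
Variable G : group.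
Local Notation "x ** y" := (gmul x y) (at level 40, left associativity).
Local Notation inv := (@ginv G).
Local Notation one := (gone G).

Lemma mulgV (x : G) : x ** inv x = one.
Proof.
rewrite -[x ** inv x]gmul1g -[in X in X ** _](@gmulVg G (inv x)).
by rewrite -gmulA [inv x ** (x ** inv x)]gmulA gmulVg gmul1g gmulVg.
Qed.

Lemma mulg1 (x : G) : x ** one = x.
Proof. by rewrite -(@gmulVg G x) gmulA mulgV gmul1g. Qed.

Lemma mulKg (x y : G) : inv x ** (x ** y) = y.
Proof. by rewrite gmulA gmulVg gmul1g. Qed.

Lemma mulVKg (x y : G) : x ** (inv x ** y) = y.
Proof. by rewrite gmulA mulgV gmul1g. Qed.

Lemma inv_uniq (x y : G) : x ** y = one -> y = inv x.
Proof. by move=> h; rewrite -[y](mulKg x) h mulg1. Qed.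

Lemma invgK (x : G) : inv (inv x) = x.
Proof. by symmetry; apply: inv_uniq; rewrite gmulVg. Qed.

Lemma invMg (x y : G) : inv (x ** y) = inv y ** inv x.
Proof.
symmetry; apply: inv_uniq.
by rewrite -gmulA mulVKg mulgV.
Qed.

Lemma inv1 : inv one = one.
Proof. by symmetry; apply: inv_uniq; rewrite gmul1g. Qed.

Lemma mulgI (x y z : G) : x ** y = x ** z -> y = z.
Proof. by move=> h; rewrite -[y](mulKg x) h mulKg. Qed.

Lemma mulIg (x y z : G) : y ** x = z ** x -> y = z.
Proof. by move=> h; rewrite -[y]mulg1 -(mulgV x) gmulA h -gmulA mulgV mulg1. Qed.

Lemma mul_eq1 (x y : G) : x ** inv y = one -> x = y.
Proof. by move=> h; apply: (@mulIg (inv y)); rewrite h mulgV. Qed.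

End GroupBasics.

Ltac gsimpl := repeat progress (rewrite ?invMg ?invgK ?inv1 -?gmulA ?mulKg ?mulVKg ?gmulVg ?mulgV ?gmul1g ?mulg1).


Section Powers.
Variable G : group.
Local Notation "x ** y" := (gmul x y) (at level 40, left associativity).
Local Notation inv := (@ginv G).
Local Notation one := (gone G).

Lemma gpowS (g : G) n : gpow g n.+1 = g ** gpow g n.
Proof. by []. Qed.

Lemma gpowD (g : G) m n : gpow g (m + n) = gpow g m ** gpow g n.
Proof. elim: m => [|m IH] /=; first by rewrite gmul1g. by rewrite IH gmulA. Qed.

Lemma gpowSr (g : G) n : gpow g n.+1 = gpow g n ** g.
Proof. by rewrite -addn1 gpowD /= mulg1. Qed.

Lemma gpow_comm (g : G) n : g ** gpow g n = gpow g n ** g.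
Proof. by rewrite -gpowS gpowSr. Qed.

Lemma gzpow_nat (g : G) n : gzpow g (Z.of_nat n) = gpow g n.
Proof. case: n => [|n] //=. by rewrite SuccNat2Pos.id_succ. Qed.

Lemma gzpow_negnat (g : G) n : gzpow g (- Z.of_nat n) = inv (gpow g n).
Proof. case: n => [|n] /=; first by rewrite inv1. by rewrite SuccNat2Pos.id_succ. Qed.

Lemma gzpow_succ (g : G) a : gzpow g (Z.succ a) = g ** gzpow g a.
Proof.
have [n [->|->]] : exists n, a = Z.of_nat n \/ a = (- Z.of_nat n.+1)%Z.
  case: a => [|p|p]; first by exists 0%N; left.
    by exists (Pos.to_nat p); left; rewrite positive_nat_Z.
  exists (Pos.to_nat p).-1; right.
  rewrite prednK; last by apply/ltP; apply: Pos2Nat.is_pos.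
  by rewrite positive_nat_Z.
  by rewrite -Nat2Z.inj_succ !gzpow_nat.
have -> : (Z.succ (- Z.of_nat n.+1) = - Z.of_nat n)%Z by lia.
by rewrite !gzpow_negnat gpowSr invMg mulVKg.
Qed.

Lemma gzpow_pred (g : G) a : gzpow g (Z.pred a) = inv g ** gzpow g a.
Proof.
by rewrite -{2}(Z.succ_pred a) gzpow_succ mulKg.
Qed.

Lemma gzpowD (g : G) a b : gzpow g (a + b) = gzpow g a ** gzpow g b.
Proof.
elim/Z.peano_ind: a => [|a IH|a IH]; first by rewrite gmul1g.
  by rewrite Z.add_succ_l !gzpow_succ IH gmulA.
by rewrite Z.add_pred_l !gzpow_pred IH gmulA.
Qed.

Lemma gzpowN (g : G) a : gzpow g (- a) = inv (gzpow g a).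
Proof.
apply: inv_uniq. by rewrite -gzpowD Z.add_opp_diag_r.
Qed.

Lemma gzpow0 (g : G) : gzpow g 0 = one.
Proof. by []. Qed.

Lemma gzpow1 (g : G) : gzpow g 1 = g.
Proof. by rewrite /= mulg1. Qed.

Lemma gzpowM (g : G) a b : gzpow (gzpow g a) b = gzpow g (a * b).
Proof.
elim/Z.peano_ind: b => [|b IH|b IH]; first by rewrite Z.mul_0_r.
  by rewrite gzpow_succ IH Z.mul_succ_r Z.add_comm gzpowD.
rewrite gzpow_pred IH Z.mul_pred_r -gzpowN.
by rewrite -gzpowD; congr gzpow; lia.
Qed.

Lemma gzpow_hom (H : G -> Prop) (F : G -> G)
  (H1 : H one) (HM : forall x y, H x -> H y -> H (x ** y))
  (HV : forall x, H x -> H (inv x))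
  (FM : forall x y, H x -> H y -> F (x ** y) = F x ** F y)
  (x : G) : H x -> (forall k, H (gzpow x k)) /\ (forall k, F (gzpow x k) = gzpow (F x) k).
Proof.
move=> Hx.
have F1 : F one = one.
  apply: (@mulgI _ (F one)); rewrite -FM // gmul1g mulg1 //.
have FV : forall y, H y -> F (inv y) = inv (F y).
  move=> y Hy; apply: inv_uniq. by rewrite -FM ?mulgV ?F1 //; apply: HV.
have HP : forall k, H (gzpow x k).
  elim/Z.peano_ind => [|k IH|k IH] //.
    by rewrite gzpow_succ; apply: HM.
  by rewrite gzpow_pred; apply: HM => //; apply: HV.
split => //.
elim/Z.peano_ind => [|k IH|k IH] //.
  by rewrite !gzpow_succ FM // IH.
by rewrite !gzpow_pred FM ?FV ?IH //; apply: HV.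
Qed.

Lemma center_mul (x y : G) : center x -> center y -> center (x ** y).
Proof. by move=> hx hy g; rewrite -gmulA hy gmulA hx gmulA. Qed.

Lemma center_inv (x : G) : center x -> center (inv x).
Proof.
move=> hx g. apply: (@mulgI _ x); by rewrite mulVKg gmulA hx -gmulA mulgV mulg1.
Qed.

Lemma center_one : center one.
Proof. by move=> g; rewrite gmul1g mulg1. Qed.

Lemma center_gzpow (x : G) k : center x -> center (gzpow x k).
Proof.
move=> hx; elim/Z.peano_ind: k => [|k IH|k IH].
- exact: center_one.
- by rewrite gzpow_succ; apply: center_mul.
- by rewrite gzpow_pred; apply: center_mul => //; apply: center_inv.
Qed.

End Powers.

Section LCS.
Variable G : group.
Local Notation "x ** y" := (gmul x y) (at level 40, left associativity).
Local Notation inv := (@ginv G).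
Local Notation one := (gone G).

Lemma lcs1 k : lcs k one.
Proof. case: k => //= k; exact: gen_one. Qed.

Lemma lcs_mul k (x y : G) : lcs k x -> lcs k y -> lcs k (x ** y).
Proof. case: k => //= k; exact: gen_mul. Qed.

Lemma lcs_inv k (x : G) : lcs k x -> lcs k (inv x).
Proof. case: k => //= k; exact: gen_inv. Qed.

Lemma lcs_comm k (x y : G) : lcs k x -> lcs k.+1 (commutator x y).
Proof. move=> h; apply: gen_base; by exists x, y. Qed.

Lemma lcs_conj k (x g : G) : lcs k x -> lcs k (inv g ** x ** g).
Proof.
elim: k x g => [//|k IH] x g /= h.
elim: h => {x} [x [a [y [ha ->]]]| |x y _ hx _ hy|x _ hx].
- apply: gen_base; exists (inv g ** a ** g), (inv g ** y ** g); split; first exact: IH.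
  rewrite /commutator; gsimpl; reflexivity.
- rewrite -gmulA gmul1g gmulVg; exact: gen_one.
- have -> : inv g ** (x ** y) ** g = (inv g ** x ** g) ** (inv g ** y ** g).
    gsimpl; reflexivity.
  exact: gen_mul.
- have -> : inv g ** inv x ** g = inv (inv g ** x ** g) by gsimpl.
  exact: gen_inv.
Qed.

Lemma lcs_decr k (x : G) : lcs k.+1 x -> lcs k x.
Proof.
case: k => [//|k] h; rewrite /= in h.
elim: h => {x} [x [a [y [ha ->]]]| |x y _ hx _ hy|x _ hx].
- have -> : commutator a y = inv a ** (inv y ** a ** y) by rewrite /commutator; gsimpl.
  have ha2 : lcs k.+1 a := ha. exact: (lcs_mul (lcs_inv ha2) (lcs_conj _ ha2)).
- exact: lcs1.
- exact: lcs_mul.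
- exact: lcs_inv.
Qed.

Lemma lcs_decrn k n (x : G) : lcs (k + n) x -> lcs k x.
Proof. elim: n => [|n IH]; rewrite ?addn0 // addnS => h; apply: IH; exact: lcs_decr. Qed.

Lemma comm1_commute (x y : G) : commutator x y = one -> x ** y = y ** x.
Proof.
rewrite /commutator => h.
have := f_equal (fun t => y ** x ** t) h. gsimpl; apply.
Qed.

Lemma commute_comm1 (x y : G) : x ** y = y ** x -> commutator x y = one.
Proof. by rewrite /commutator => ->; gsimpl. Qed.

Lemma normal_meets_center (N : G -> Prop) :
  nilpotent G ->
  (forall x y, N x -> N y -> N (x ** y)) -> (forall x, N x -> N (inv x)) ->
  (forall x g, N x -> N (inv g ** x ** g)) ->
  forall x, N x -> x <> one -> exists y, N y /\ y <> one /\ center y.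
Proof.
move=> [c hc] NM NV NC.
suff: forall m j, j + m = c -> forall x, lcs j x -> N x -> x <> one ->
   exists y, N y /\ y <> one /\ center y.
  by move=> H x Nx x1; exact: (H c 0%N (add0n c) x I Nx x1).
elim=> [|m IH] j hj x lx Nx x1.
  by rewrite addn0 in hj; subst j; case: x1; apply: hc.
case: (classic (center x)) => [cx|ncx]; first by exists x.
have [g hg] : exists g, gmul x g <> gmul g x.
  apply: NNPP => hn; apply: ncx => g; apply: NNPP => h; apply: hn; by exists g.
apply: (IH j.+1 _ (commutator x g)).
- by rewrite addSnnS.
- exact: lcs_comm.
- rewrite /commutator -gmulA; apply: NM; first exact: NV.
  rewrite gmulA; exact: NC.
- by move=> h; apply: hg; apply: comm1_commute.
Qed.

Lemma root_central (y : G) n :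
  torsion_free G -> nilpotent G -> center (gpow y n.+1) -> center y.
Proof.
move=> tf [c hc] hy.
suff H: forall m j, j + m = c -> forall u, lcs j u -> gmul u y = gmul y u.
  by move=> g; symmetry; apply: (H c 0%N).
elim=> [|m IH] j hj u lu.
  by rewrite addn0 in hj; subst j; rewrite (hc _ lu) gmul1g mulg1.
have [w ew] : exists w, w = commutator u y by eexists.
have wy : w ** y = y ** w by rewrite ew; apply: (IH j.+1); [rewrite addSnnS | exact: lcs_comm].
have wyk : forall k, w ** gpow y k = gpow y k ** w.
  elim=> [|k IHk]; first by rewrite /= gmul1g mulg1.
  by rewrite gpowS gmulA wy -!gmulA IHk.
have key : forall k, inv u ** inv (gpow y k) ** u = gpow w k ** inv (gpow y k).
  elim=> [|k IHk]; first by rewrite /= inv1 mulg1 gmulVg gmul1g.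
  have e1 : inv u ** inv y ** u = w ** inv y by rewrite ew /commutator; gsimpl.
  rewrite gpowS invMg.
  have -> : inv u ** (inv (gpow y k) ** inv y) ** u =
            (inv u ** inv (gpow y k) ** u) ** (inv u ** inv y ** u) by gsimpl.
  rewrite IHk e1.
  have wyki : w ** inv (gpow y k) = inv (gpow y k) ** w.
    apply: (@mulgI _ (gpow y k)); apply: (@mulIg _ (gpow y k)).
    by gsimpl; rewrite wyk.
  by rewrite gpowSr -!gmulA (gmulA (inv (gpow y k)) w) -wyki -!gmulA.
have hw : gpow w n.+1 = one.
  have e := key n.+1.
  have cY := center_inv hy.
  rewrite -gmulA (cY u) mulKg in e.
  apply: (@mulIg _ (inv (gpow y n.+1))); by rewrite -e gmul1g.
have w1 := tf _ _ hw.
apply: comm1_commute; by rewrite -ew.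
Qed.

End LCS.

Section PhiSec.
Variable G : group.
Local Notation "x ** y" := (gmul x y) (at level 40, left associativity).
Local Notation inv := (@ginv G).
Local Notation one := (gone G).

Fixpoint Phi (u : G) (vs : list G) : G :=
  match vs with nil => u | v :: vs' => Phi (commutator u v) vs' end.

Lemma Phi_lcs k u vs : lcs k u -> lcs (k + size vs) (Phi u vs).
Proof.
elim: vs k u => [|v vs IH] k u h /=; first by rewrite addn0.
rewrite -addSnnS; apply: IH; exact: lcs_comm.
Qed.

Lemma Phi_app u vs1 vs2 : Phi u (vs1 ++ vs2) = Phi (Phi u vs1) vs2.
Proof. by elim: vs1 u => [|v vs IH] u //=. Qed.

Lemma comm_1l (v : G) : commutator one v = one.
Proof. by rewrite /commutator; gsimpl. Qed.

Lemma comm_1r (v : G) : commutator v one = one.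
Proof. by rewrite /commutator; gsimpl. Qed.

Lemma Phi_one vs : Phi one vs = one.
Proof. by elim: vs => [|v vs IH] //=; rewrite comm_1l. Qed.

Variable c' : nat.
Hypothesis hc : forall g : G, lcs c'.+1 g -> g = one.

Lemma top_central (u : G) : lcs c' u -> center u.
Proof.
move=> h g; apply: comm1_commute; apply: hc; exact: lcs_comm.
Qed.

Lemma Phi_zero k u vs : lcs k.+1 u -> k + size vs = c' -> Phi u vs = one.
Proof.
move=> h e; apply: hc; have := Phi_lcs vs h. by rewrite addSn e.
Qed.

Lemma Phi_central k u vs : lcs k u -> k + size vs = c' -> center (Phi u vs).
Proof. move=> h e; apply: top_central; rewrite -e; exact: Phi_lcs. Qed.

Lemma Phi_M vs : forall k, k + size vs = c' ->
  (forall u1 u2, lcs k u1 -> lcs k u2 -> Phi (u1 ** u2) vs = Phi u1 vs ** Phi u2 vs) /\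
  (forall u g, lcs k u -> Phi (inv g ** u ** g) vs = Phi u vs).
Proof.
elim: vs => [|v vs IH] k /= e.
  rewrite addn0 in e; subst k; split => // u g h.
  by rewrite -gmulA (top_central h g) mulKg.
have e1 : k.+1 + size vs = c' by rewrite addSnnS.
have [IHm IHc] := IH k.+1 e1.
have Mk : forall u1 u2, lcs k u1 -> lcs k u2 ->
   Phi (commutator (u1 ** u2) v) vs = Phi (commutator u1 v) vs ** Phi (commutator u2 v) vs.
  move=> u1 u2 h1 h2.
  have -> : commutator (u1 ** u2) v = (inv u2 ** commutator u1 v ** u2) ** commutator u2 v.
    by rewrite /commutator; gsimpl.
  have l1 := lcs_comm v h1; have l2 := lcs_comm v h2; have l3 := lcs_conj u2 l1.
  by rewrite IHm // IHc.
split => // u g h.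
have -> : inv g ** u ** g = u ** commutator u g by rewrite /commutator; gsimpl.
rewrite Mk //; last by apply: lcs_decr; exact: lcs_comm.
have lz : lcs k.+2 (commutator (commutator u g) v) by do 2 apply: lcs_comm.
by rewrite (Phi_zero lz e1) mulg1.
Qed.

Lemma Phi_lin k u v1 v2 vs : k + (size vs).+1 = c' -> lcs k u ->
  Phi u ((v1 ** v2) :: vs) = Phi u (v1 :: vs) ** Phi u (v2 :: vs).
Proof.
move=> e h /=.
have e' : k.+1 + size vs = c' by rewrite addSnnS.
have [Mm Mc] := Phi_M e'.
have -> : commutator u (v1 ** v2) = commutator u v2 ** (inv v2 ** commutator u v1 ** v2).
  by rewrite /commutator; gsimpl.
have l1 := lcs_comm v1 h; have l2 := lcs_comm v2 h; have l3 := lcs_conj v2 l1.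
rewrite Mm // Mc //.
exact: (Phi_central l2 e').
Qed.

Lemma Phi_pow_slot k u v n vs : k + (size vs).+1 = c' -> lcs k u ->
  Phi u (gpow v n :: vs) = gpow (Phi u (v :: vs)) n.
Proof.
move=> e h; elim: n => [|n IH].
  by rewrite /= comm_1r Phi_one.
by rewrite gpowS (@Phi_lin k u v (gpow v n) vs e h) IH.
Qed.

Lemma Phi_pow_first u n vs : size vs = c' -> Phi (gpow u n) vs = gpow (Phi u vs) n.
Proof.
move=> e; have [Mm _] := @Phi_M vs 0%N e.
elim: n => [|n IH]; first by rewrite /= Phi_one.
by rewrite gpowS Mm // IH.
Qed.

Lemma Phi_exists : (exists u, lcs c' u /\ u <> one) ->
  exists g0 gs, size gs = c' /\ Phi g0 gs <> one.
Proof.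
move=> [u [lu u1]]; apply: NNPP => hn.
have H0 : forall g0 gs, size gs = c' -> Phi g0 gs = one.
  move=> g0 gs e; apply: NNPP => h; apply: hn; by exists g0, gs.
suff: forall k, k <= c' -> forall u vs, lcs k u -> k + size vs = c' -> Phi u vs = one.
  by move=> H; apply: u1; apply: (H c' (leqnn _) u nil lu); rewrite addn0.
elim=> [|k IH] hk u' vs h e; first by apply: H0; rewrite -e.
have [Mm _] := Phi_M e.
move: h; rewrite /= => h.
elim: h => {u'} [x [a [y [ha ->]]]| |x y gx hx gy hy|x gx hx].
- have := IH (ltnW hk) a (y :: vs) ha; rewrite /= => -> //.
  by rewrite addnS -addSn.
- exact: Phi_one.
- by rewrite Mm // hx hy gmul1g.
- apply: (@mulIg _ (Phi x vs)); rewrite -Mm ?gmulVg ?Phi_one ?hx ?mulg1 //.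
  exact: gen_inv.
Qed.

Lemma Phi_P (P : G -> Prop) :
  torsion_free G ->
  (forall x y, P x -> P y -> P (x ** y)) -> (forall x, P x -> P (inv x)) ->
  (forall g, exists N, P (gpow g N.+1)) ->
  (exists u, lcs c' u /\ u <> one) ->
  exists h0 hs, P h0 /\ List.Forall P hs /\ size hs = c' /\ Phi h0 hs <> one.
Proof.
move=> tf Pmul Pinv Ppow ex.
have [g0 [gs [e hn]]] := Phi_exists ex.
have [N hN] := Ppow g0.
have hn0 : Phi (gpow g0 N.+1) gs <> one.
  rewrite Phi_pow_first // => h; apply: hn; exact: tf h.
suff: forall vs k u, lcs k u -> k + size vs = c' -> P u -> Phi u vs <> one ->
   exists hs, List.Forall P hs /\ size hs = size vs /\ Phi u hs <> one.
  move=> H; have [hs [h1 [h2 h3]]] := H gs 0%N _ I e hN hn0.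
  by exists (gpow g0 N.+1), hs; rewrite h2.
elim=> [|v vs IH] k u lu ek Pu hu.
  by exists nil.
have [M hM] := Ppow v.
have ek' : k + (size vs).+1 = c' by [].
have h1 : Phi u (gpow v M.+1 :: vs) <> one.
  rewrite (@Phi_pow_slot k u v M.+1 vs ek' lu) => h; apply: hu; exact: tf h.
have h1' : Phi (commutator u (gpow v M.+1)) vs <> one := h1.
have e1 : k.+1 + size vs = c' by rewrite addSnnS.
have Pc : P (commutator u (gpow v M.+1)) :=
  Pmul _ _ (Pmul _ _ (Pinv _ Pu) (Pinv _ hM)) (Pmul _ _ Pu hM).
have [hs [f1 [f2 f3]]] := IH k.+1 _ (lcs_comm (gpow v M.+1) lu) e1 Pc h1'.
exists (gpow v M.+1 :: hs); split; first by constructor.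
by split; [rewrite /= f2|].
Qed.

End PhiSec.

Lemma Phi_hom (G : group) (P : G -> Prop) (F : G -> G) :
  (forall x y, P x -> P y -> P (gmul x y)) -> (forall x, P x -> P (ginv x)) ->
  (forall x y, P x -> P y -> F (gmul x y) = gmul (F x) (F y)) ->
  forall u vs, P u -> List.Forall P vs ->
  P (Phi u vs) /\ F (Phi u vs) = Phi (F u) (List.map F vs).
Proof.
move=> Pmul Pinv FM.
have FV : forall x, P x -> F (ginv x) = ginv (F x).
  move=> x Px.
  have P1 : P (gone G) by rewrite -(gmulVg x); apply: (Pmul) => //; apply: (Pinv).
  have F1 : F (gone G) = gone G.
    apply: (@mulgI _ (F (gone G))); by rewrite -FM // gmul1g mulg1.
  apply: inv_uniq; by rewrite -FM ?mulgV ?F1 //; apply: (Pinv).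
have PC : forall x y, P x -> P y -> P (commutator x y).
  by move=> x y Px Py; rewrite /commutator; apply: (Pmul); apply: (Pmul); auto.
have FC : forall x y, P x -> P y -> F (commutator x y) = commutator (F x) (F y).
  move=> x y Px Py; rewrite /commutator FM ?FM ?FV //; auto.
move=> u vs Pu Pvs; elim: Pvs u Pu => [|v ws Pv Pws IH] u Pu //=.
rewrite -FC //; apply: IH; exact: PC.
Qed.

Section ActionSec.
Variable G : group.
Local Notation "x ** y" := (gmul x y) (at level 40, left associativity).
Local Notation inv := (@ginv G).
Local Notation one := (gone G).
Variable A : finType.
Variable act : G -> (nat -> A) -> (nat -> A).
Hypothesis Hact : is_action act.
Hypothesis Hfaith : faithful_action act.
Hypothesis Hss : self_similar_action act.

Definition ssd (g : G) (a : A) : {p : G * A | forall w, act g (scons a w) = scons p.2 (act p.1 w)}.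
Proof.
apply: constructive_indefinite_description.
have [ga [b' h]] := Hss g a; by exists (ga, b').
Defined.

Definition sec g a := (proj1_sig (ssd g a)).1.
Definition lt g a := (proj1_sig (ssd g a)).2.

Lemma sec_spec g a w : act g (scons a w) = scons (lt g a) (act (sec g a) w).
Proof. exact: (proj2_sig (ssd g a)). Qed.

Lemma act1 w : act one w = w.
Proof. by case: Hact. Qed.

Lemma actM g h w : act (g ** h) w = act g (act h w).
Proof. by case: Hact. Qed.

Lemma act_inj g h : (forall w, act g w = act h w) -> g = h.
Proof.
move=> e; apply: mul_eq1; apply: Hfaith => w.
by rewrite actM e -actM mulgV act1.
Qed.

Lemma scons_eta (w : nat -> A) : w = scons (w 0) (fun n => w n.+1).
Proof. by apply: functional_extensionality => -[|n]. Qed.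

Lemma lt_sec_mul g h a : lt (g ** h) a = lt g (lt h a) /\ sec (g ** h) a = sec g (lt h a) ** sec h a.
Proof.
have E : forall w, scons (lt (g ** h) a) (act (sec (g ** h) a) w) =
                   scons (lt g (lt h a)) (act (sec g (lt h a) ** sec h a) w).
  by move=> w; rewrite -sec_spec actM sec_spec sec_spec actM.
split.
  by have := f_equal (fun f => f 0) (E (fun _ => a)).
apply: act_inj => w; apply: functional_extensionality => n.
exact: (f_equal (fun f => f n.+1) (E w)).
Qed.

Lemma ltM g h a : lt (g ** h) a = lt g (lt h a).
Proof. by case: (lt_sec_mul g h a). Qed.

Lemma secM g h a : sec (g ** h) a = sec g (lt h a) ** sec h a.
Proof. by case: (lt_sec_mul g h a). Qed.

Lemma lt_sec_1 a : lt one a = a /\ sec one a = one.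
Proof.
have E : forall w, scons (lt one a) (act (sec one a) w) = scons a (act one w).
  by move=> w; rewrite -sec_spec !act1.
split; first by have := f_equal (fun f => f 0) (E (fun _ => a)).
apply: act_inj => w; apply: functional_extensionality => n.
exact: (f_equal (fun f => f n.+1) (E w)).
Qed.

Lemma lt1 a : lt one a = a. Proof. by case: (lt_sec_1 a). Qed.
Lemma sec1 a : sec one a = one. Proof. by case: (lt_sec_1 a). Qed.

Lemma ltV g a : lt (inv g) (lt g a) = a.
Proof. by rewrite -ltM gmulVg lt1. Qed.

Lemma ltVr g a : lt g (lt (inv g) a) = a.
Proof. by rewrite -ltM mulgV lt1. Qed.

Lemma secM_stab g h b : lt h b = b -> sec (g ** h) b = sec g b ** sec h b.
Proof. by move=> e; rewrite secM e. Qed.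

Definition Pfix (g : G) := forall a, lt g a = a.

Lemma Pfix_mul x y : Pfix x -> Pfix y -> Pfix (x ** y).
Proof. by move=> hx hy a; rewrite ltM hy hx. Qed.

Lemma Pfix_inv x : Pfix x -> Pfix (inv x).
Proof. by move=> hx a; rewrite -{1}(hx a) ltV. Qed.

Lemma Pfix_pow (g : G) : exists N, Pfix (gpow g N.+1).
Proof.
pose f (i : 'I_(#|{ffun A -> A}|.+1)) : {ffun A -> A} := [ffun a => lt (gpow g i) a].
have : ~ injective f.
  move=> hinj; have := @leq_card _ _ f hinj; by rewrite card_ord ltnn.
move=> ninj.
have [i [j [ij fij]]] : exists i j : 'I_(#|{ffun A -> A}|.+1), (i < j)%N /\ f i = f j.
  apply: NNPP => hn; apply: ninj => i j e.
  apply: val_inj; case: (ltngtP i j) => h.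
  - by exfalso; apply: hn; exists i, j.
  - by exfalso; apply: hn; exists j, i.
  - exact: h.
have eij : forall a, lt (gpow g i) a = lt (gpow g j) a.
  by move=> a; have := f_equal (fun F : {ffun A -> A} => F a) fij; rewrite /f !ffunE.
exists (j - i).-1; rewrite prednK ?subn_gt0 // => a.
set a' := lt (inv (gpow g i)) a.
have -> : a = lt (gpow g i) a' by rewrite /a' ltVr.
by rewrite -ltM -gpowD subnK ?(ltnW ij) // eij.
Qed.


Section Orbit.
Variable b : A.

Definition orbb (x : A) : bool :=
  if excluded_middle_informative (exists g, lt g b = x) then true else false.

Lemma orbbP x : orbb x <-> exists g, lt g b = x.
Proof.
rewrite /orbb; case: excluded_middle_informative => h; split => //.
Qed.

Definition X := {x : A | orbb x}.

Lemma xact_proof g (x : X) : orbb (lt g (sval x)).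
Proof.
have [k hk] := proj1 (orbbP _) (svalP x).
apply/orbbP; exists (g ** k); by rewrite ltM hk.
Qed.

Definition xact g (x : X) : X := exist _ (lt g (sval x)) (xact_proof g x).

Definition tr (x : X) : G :=
  proj1_sig (constructive_indefinite_description _ (proj1 (orbbP _) (svalP x))).

Lemma trP x : lt (tr x) b = sval x.
Proof. exact: (proj2_sig (constructive_indefinite_description _ (proj1 (orbbP _) (svalP x)))). Qed.

Lemma xact1 x : xact one x = x.
Proof. by apply: val_inj; rewrite /= lt1. Qed.

Lemma xactM g h x : xact (g ** h) x = xact g (xact h x).
Proof. by apply: val_inj; rewrite /= ltM. Qed.

Definition hel g x := inv (tr (xact g x)) ** (g ** tr x).

Lemma hel_stab g x : lt (hel g x) b = b.
Proof.
rewrite /hel !ltM trP.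
have -> : lt g (sval x) = sval (xact g x) by [].
by rewrite -trP ltV.
Qed.

Definition hsec g x := sec (hel g x) b.

Fixpoint psin (n : nat) (g : G) (w : nat -> X) : X :=
  match n with
  | O => xact g (w 0)
  | S k => psin k (hsec g (w 0)) (fun i => w i.+1)
  end.

Definition psi g w := fun n => psin n g w.

Lemma hsec1 x : hsec one x = one.
Proof. by rewrite /hsec /hel xact1 gmul1g gmulVg sec1. Qed.

Lemma hsecM g h x : hsec (g ** h) x = hsec g (xact h x) ** hsec h x.
Proof.
rewrite /hsec -secM_stab ?hel_stab //; congr sec.
by rewrite /hel xactM; gsimpl.
Qed.

Lemma psi_action : is_action psi.
Proof.
split.
  move=> w; apply: functional_extensionality => n; rewrite /psi.
  elim: n w => [|n IH] w /=; first by rewrite xact1.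
  by rewrite hsec1 IH.
move=> g h w; apply: functional_extensionality => n; rewrite /psi.
elim: n g h w => [|n IH] g h w /=; first by rewrite xactM.
by rewrite hsecM IH.
Qed.

Lemma psi_ss : self_similar_action psi.
Proof.
move=> g x; exists (hsec g x), (xact g x) => w.
by apply: functional_extensionality => -[|n].
Qed.

Lemma psi_trans : transitive_action psi.
Proof.
move=> x y; exists (tr y ** inv (tr x)) => w.
apply: val_inj; rewrite /psi /= ltM -trP ltV trP //.
Qed.

Definition bX : X := exist _ b (proj2 (orbbP b) (ex_intro _ one (lt1 b))).

Definition Kb (g : G) := forall w, psi g w = w.

Lemma Kb_mul x y : Kb x -> Kb y -> Kb (x ** y).
Proof. by move=> hx hy w; have [_ ->] := psi_action; rewrite hy hx. Qed.

Lemma Kb_inv x : Kb x -> Kb (inv x).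
Proof.
move=> hx w; have [h1 hM] := psi_action.
by rewrite -{1}(hx w) -hM gmulVg h1.
Qed.

Lemma Kb_one : Kb one.
Proof. by move=> w; have [h1 _] := psi_action; rewrite h1. Qed.

Lemma Kb_conj x g : Kb x -> Kb (inv g ** x ** g).
Proof.
move=> hx w; have [h1 hM] := psi_action.
by rewrite !hM hx -hM gmulVg h1.
Qed.

Lemma Kb_stab x : Kb x -> lt x b = b.
Proof.
move=> hx; have := f_equal (fun w => sval (w 0)) (hx (fun _ => bX)).
by rewrite /psi /=.
Qed.

Lemma Kb_sec x : Kb x -> center x -> Kb (sec x b).
Proof.
move=> hx cx w.
have e := hx (scons bX w).
have xb : xact x bX = bX by apply: val_inj; rewrite /= Kb_stab.
have hb : hel x bX = x by rewrite /hel xb cx mulKg.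
apply: functional_extensionality => n.
have := f_equal (fun f => f n.+1) e.
by rewrite /psi /= /hsec hb.
Qed.

Lemma Kb_gzpow x k : Kb x -> Kb (gzpow x k).
Proof.
move=> hx; elim/Z.peano_ind: k => [|k IH|k IH].
- exact: Kb_one.
- by rewrite gzpow_succ; apply: Kb_mul.
- by rewrite gzpow_pred; apply: Kb_mul => //; apply: Kb_inv.
Qed.

End Orbit.


Lemma min_nat (Q : nat -> Prop) : (exists n, Q n) -> exists n, Q n /\ forall m, (m < n)%N -> ~ Q m.
Proof.
move=> [n hn]; elim: n {-2}n (leqnn n) hn => [|N IH] n hn Qn.
  exists n; split => // m hm; move: hn; rewrite leqn0 => /eqP e; by rewrite e in hm.
case: (classic (exists m, (m < n)%N /\ Q m)) => [[m [hm Qm]]|h].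
  apply: (IH m) => //; by rewrite -ltnS (leq_trans hm hn).
exists n; split => // m hm Qm; apply: h; by exists m.
Qed.

Variables (z : G).
Hypothesis tf : torsion_free G.
Hypothesis nilp : nilpotent G.
Hypothesis cz : center z.
Hypothesis zinj : forall m n : Z, gzpow z m = gzpow z n -> m = n.
Hypothesis zall : forall y : G, center y -> exists n : Z, y = gzpow z n.

Lemma z_ne1 k : k <> 0%Z -> gzpow z k <> one.
Proof. by move=> hk e; apply: hk; apply: zinj; rewrite e. Qed.

(* a nontrivial central element of the top of the lower central series, fixing all letters,
   whose sections are central *)
Lemma good_central : exists m0 : Z, m0 <> 0%Z /\ Pfix (gzpow z m0) /\
   forall b, center (sec (gzpow z m0) b).
Proof.
have [c [hc hmin]] := min_nat nilp.
case: c hc hmin => [|c'] hc hmin.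
  by exfalso; apply: (@z_ne1 1) => //; rewrite gzpow1; apply: hc.
have ex : exists u, lcs c' u /\ u <> one.
  apply: NNPP => hn; apply: (hmin c' (ltnSn _)) => g lg.
  apply: NNPP => h; apply: hn; by exists g.
have [h0 [hs [P0 [Ps [sz ne]]]]] := Phi_P hc tf (@Pfix_mul) (@Pfix_inv) (@Pfix_pow) ex.
have ly : lcs c' (Phi h0 hs) by rewrite -sz; exact: (@Phi_lcs _ 0%N h0 hs I).
have cy := top_central hc ly.
have [m0 em0] := zall cy.
exists m0; split.
  by move=> e; apply: ne; rewrite em0 e.
have Py : Pfix (Phi h0 hs) /\ forall b, center (sec (Phi h0 hs) b).
  split.
    have [PP _] := @Phi_hom G Pfix (fun g => g) (@Pfix_mul) (@Pfix_inv) (fun _ _ _ _ => erefl) h0 hs P0 Ps.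
    exact: PP.
  move=> b.
  have [_ FF] := @Phi_hom G Pfix (fun g => sec g b) (@Pfix_mul) (@Pfix_inv)
     (fun x y _ Py => secM_stab x (Py b)) h0 hs P0 Ps.
  rewrite FF; apply: (top_central hc).
  have := @Phi_lcs _ 0%N (sec h0 b) (List.map (fun g => sec g b) hs) I.
  by rewrite size_map sz.
by rewrite -em0.
Qed.

Lemma contra : (forall b, ~ faithful_action (@psi b)) -> False.
Proof.
move=> nf.
have [m0 [m0ne [Pm0 cm0]]] := good_central.
have data : forall b, exists p : Z * Z, (0 < p.1)%Z /\ Kb b (gzpow z p.1) /\
            sec (gzpow z p.1) b = gzpow z (p.1 * p.2).
  move=> b.
  have [g [Kg g1]] : exists g, Kb b g /\ g <> one.
    apply: NNPP => hn; apply: (nf b) => g Kg; apply: NNPP => h; apply: hn; by exists g.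
  have [y [Ky [y1 cy]]] := normal_meets_center nilp (@Kb_mul b) (@Kb_inv b) (@Kb_conj b) Kg g1.
  have [m em] := zall cy.
  have mne : m <> 0%Z by move=> e; apply: y1; rewrite em e.
  have Kpos : exists n : nat, (0 < n)%N /\ Kb b (gzpow z (Z.of_nat n)).
    exists (Z.to_nat (Z.abs m)); split; first by apply/ltP; lia.
    rewrite Z2Nat.id; last by lia.
    case: (Z.abs_spec m) => [[_ ->]|[_ ->]]; first by rewrite -em.
    by rewrite gzpowN -em; apply: Kb_inv.
  have [d [[dpos Kd] dmin]] := min_nat Kpos.
  set zd := gzpow z (Z.of_nat d).
  have stab : lt zd b = b := Kb_stab Kd.
  pose H := fun g => lt g b = b.
  have H1 : H one by rewrite /H lt1.
  have HM : forall x1 x2, H x1 -> H x2 -> H (x1 ** x2) by move=> x1 x2 hx hy; rewrite /H ltM hy hx.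
  have HV : forall x, H x -> H (inv x) by move=> x hx; rewrite /H -{1}hx ltV.
  have FM : forall x1 x2, H x1 -> H x2 -> sec (x1 ** x2) b = sec x1 b ** sec x2 b
    by move=> x1 x2 _ hy; apply: secM_stab.
  have [_ Fpow_d] := gzpow_hom H1 HM HV FM stab.
  have [_ Fpow_m] := gzpow_hom H1 HM HV FM (Pm0 b).
  have cFd : center (sec zd b).
    set NN := Z.to_nat (Z.abs m0).
    have Nps : (0 < NN)%N by apply/ltP; rewrite /NN; lia.
    apply: (@root_central _ _ NN.-1 tf nilp).
    rewrite (prednK Nps) -gzpow_nat -Fpow_d gzpowM.
    have -> : (Z.of_nat d * Z.of_nat NN = m0 * (Z.of_nat d * Z.sgn m0))%Z.
      rewrite /NN Z2Nat.id; last by lia.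
      case: (Z.sgn_spec m0) => [[h ->]|[[h ->]|[h ->]]]; nia.
    rewrite -gzpowM Fpow_m; apply: center_gzpow; exact: cm0.
  have Kfd : Kb b (sec zd b) by apply: Kb_sec => //; apply: center_gzpow.
  have [s es] := zall cFd.
  rewrite es in Kfd.
  have dpos' : (0 < Z.of_nat d)%Z by move/ltP: dpos; lia.
  exists (Z.of_nat d, (s / Z.of_nat d)%Z); split; first by simpl; lia.
  split => //=.
  rewrite es; congr gzpow.
  have hr := Z.mod_pos_bound s (Z.of_nat d) dpos'.
  have hdm := Z.div_mod s (Z.of_nat d) (ltac:(lia)).
  suff r0 : (s mod Z.of_nat d = 0)%Z by lia.
  apply: NNPP => rn.
  apply: (dmin (Z.to_nat (s mod Z.of_nat d))).
    apply/ltP; lia.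
  split; first by apply/ltP; lia.
  rewrite Z2Nat.id; last by lia.
  have -> : (s mod Z.of_nat d = s + (- (Z.of_nat d * (s / Z.of_nat d))))%Z by lia.
  rewrite gzpowD gzpowN -gzpowM; apply: Kb_mul => //; apply: Kb_inv; exact: Kb_gzpow.
pose dr := fun b => proj1_sig (constructive_indefinite_description _ (data b)).
have drP : forall b, (0 < (dr b).1)%Z /\ Kb b (gzpow z (dr b).1) /\
            sec (gzpow z (dr b).1) b = gzpow z ((dr b).1 * (dr b).2).
  move=> b; exact: (proj2_sig (constructive_indefinite_description _ (data b))).
pose L := foldr Z.mul 1%Z (map (fun b => (dr b).1) (enum A)).
have Lprop : forall s : seq A, (0 < foldr Z.mul 1%Z (map (fun b => (dr b).1) s))%Z /\
    forall b, b \in s -> exists q, foldr Z.mul 1%Z (map (fun b => (dr b).1) s) = ((dr b).1 * q)%Z.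
  elim=> [|a s [IH1 IH2]] /=; first by split => //; lia.
  have [pa _] := drP a.
  split; first by apply: Z.mul_pos_pos.
  move=> b; rewrite in_cons => /orP [/eqP ->|bs].
    by exists (foldr Z.mul 1%Z (map (fun b => (dr b).1) s)).
  have [q eq] := IH2 b bs; exists ((dr a).1 * q)%Z; rewrite eq; ring.
have [Lpos Ldiv] := Lprop (enum A).
have key : forall n k w, act (gzpow z (L * k)) w n = w n.
  elim=> [|n IH] k w; rewrite [in act _ w](scons_eta w) sec_spec;
  set a := w 0;
  have [q eq] := Ldiv a (mem_enum _ a);
  have [_ [Ka Fa]] := drP a;
  have Kg : Kb a (gzpow z (L * k)) by rewrite /L eq -Z.mul_assoc -gzpowM; apply: Kb_gzpow.
  - by rewrite /= (Kb_stab Kg).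
  - rewrite /=.
    pose H := fun g => lt g a = a.
    have H1 : H one by rewrite /H lt1.
    have HM : forall x1 x2, H x1 -> H x2 -> H (x1 ** x2) by move=> x1 x2 hx hy; rewrite /H ltM hy hx.
    have HV : forall x, H x -> H (inv x) by move=> x hx; rewrite /H -{1}hx ltV.
    have FM : forall x1 x2, H x1 -> H x2 -> sec (x1 ** x2) a = sec x1 a ** sec x2 a
      by move=> x1 x2 _ hy; apply: secM_stab.
    have [_ Fp] := gzpow_hom H1 HM HV FM (Kb_stab Ka).
    have -> : sec (gzpow z (L * k)) a = gzpow z (L * ((dr a).2 * k)).
      rewrite /L eq -Z.mul_assoc -gzpowM Fp Fa gzpowM; congr gzpow; ring.
    exact: IH.
have : gzpow z L = one.
  apply: Hfaith => w; apply: functional_extensionality => n.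
  by have := key n 1%Z w; rewrite Z.mul_1_r.
by apply: z_ne1; lia.
Qed.

End ActionSec.

Theorem lemma24 (G : group) :
  finitely_generated G -> torsion_free G -> nilpotent G -> center_iso_Z G ->
  self_similar G -> transitive_self_similar G.
Proof.
move=> _ tf nilp [z [cz [zinj zall]]] [A [act [Hact [Hf Hss]]]].
case: (classic (exists b, faithful_action (@psi G A act Hact Hf Hss b))) => [[b fb]|nf].
  exists (X Hss b), (@psi G A act Hact Hf Hss b).
  split; first exact: psi_action.
  split; first exact: fb.
  split; first exact: psi_ss.
  exact: psi_trans.
exfalso.
apply: (@contra G A act Hact Hf Hss z tf nilp cz zinj zall).
move=> b fb; apply: nf; by exists b.
Qed.
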